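(* Let $\mathcal{A}$ be a probabilistic automaton with state set $Q$, and let $(u_n)_{n\in\mathbb{N}}$ and $(v_n)_{n\in\mathbb{N}}$ be sequences of words that reify limit-words $\mathbf{u}$ and $\mathbf{v}$ respectively. Then: (1) the sequence $(u_n\cdot v_n)_{n\in\mathbb{N}}$ reifies $\mathbf{u}\cdot\mathbf{v}$; (2) if $\mathbf{u}$ is idempotent, then there exists an increasing function $f:\mathbb{N}\to\mathbb{N}$ such that for every increasing function $g:\mathbb{N}\to\mathbb{N}$ with $g\ge f$ (pointwise), the sequence $(u_{g(n)}^{\,n})_{n\in\mathbb{N}}$ reifies $\mathbf{u}^\sharp$.
   Context: Fix a finite alphabet $A$. A probabilistic automaton is $\mathcal{A}=(Q,q_0,\Delta,F)$ with $Q$ finite, $q_0\in Q$, $F\subseteq Q$ and $\Delta: Q\times A\to\mathcal{D}(Q)$. For $a\in A$ let $M_a(s,t)=\Delta(s,a)(t)$, for $u=a_0\cdots a_{n-1}$ let $M_u=M_{a_0}\cdots M_{a_{n-1}}$ (identity for the empty word), and $\mathbb{P}_{\mathcal{A}}(s\xrightarrow{u}t)=M_u(s,t)$; $u^n$ denotes $u$ concatenated $n$ times. A limit-word is a map $\mathbf{u}:Q\times Q\to\{0,1\}$ such that every $s$ has some $t$ with $\mathbf{u}(s,t)=1$. Concatenation: $(\mathbf{u}\cdot\mathbf{v})(s,t)=1$ iff there is $q$ with $\mathbf{u}(s,q)=\mathbf{v}(q,t)=1$. $\mathbf{u}$ is idempotent if $\mathbf{u}\cdot\mathbf{u}=\mathbf{u}$;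 for idempotent $\mathbf{u}$, $s$ is $\mathbf{u}$-recurrent if for all $t$, $\mathbf{u}(s,t)=1\Rightarrow\mathbf{u}(t,s)=1$, and $\mathbf{u}^\sharp(s,t)=1$ iff $\mathbf{u}(s,t)=1$ and $t$ is $\mathbf{u}$-recurrent. A sequence of words $(w_n)_{n}$ reifies a limit-word $\mathbf{w}$ if for all states $s,t$ the sequence $\mathbb{P}_{\mathcal{A}}(s\xrightarrow{w_n}t)$ converges and $\mathbf{w}(s,t)=1\iff\lim_n\mathbb{P}_{\mathcal{A}}(s\xrightarrow{w_n}t)>0$. *)

(* Defs.v *)
From mathcomp Require Import all_boot all_order all_algebra.
From mathcomp Require Import all_classical all_reals all_analysis.
Set Implicit Arguments. Unset Strict Implicit. Unset Printing Implicit Defensive.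
Import Order.TTheory GRing.Theory Num.Theory numFieldNormedType.Exports.
Local Open Scope ring_scope.

(* A probabilistic automaton over the finite alphabet A with finite state set Q.
   delta a s t = Delta(s,a)(t); each Delta(s,a) is a probability distribution on Q. *)
Record PA (R : realType) (A Q : finType) := MkPA {
  pa_init : Q;
  pa_delta : A -> Q -> Q -> R;
  pa_final : {set Q};
  pa_delta_ge0 : forall a s t, 0 <= pa_delta a s t;
  pa_delta_sum1 : forall a s, \sum_(t : Q) pa_delta a s t = 1
}.

(* M_u(s,t) = P(s --u--> t), with M_{a u} = M_a M_u and M_eps = identity. *)
Fixpoint Mword (R : realType) (A Q : finType) (P : PA R A Q) (u : seq A) (s t : Q) : R :=
  match u with
  | [::] => (s == t)%:R
  | a :: u' => \sum_(q : Q) pa_delta P a s q * Mword P u' q t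
  end.

Definition wpow (A : Type) (u : seq A) (n : nat) : seq A := flatten (nseq n u).

Definition lword (Q : finType) := Q -> Q -> bool.
Definition is_limit_word (Q : finType) (w : lword Q) : Prop :=
  forall s, exists t, w s t.
Definition lw_mul (Q : finType) (u v : lword Q) : lword Q :=
  fun s t => [exists q, u s q && v q t].
Definition lw_idempotent (Q : finType) (u : lword Q) : Prop :=
  forall s t, lw_mul u u s t = u s t.
Definition lw_recurrent (Q : finType) (u : lword Q) (s : Q) : bool :=
  [forall t, u s t ==> u t s].
Definition lw_sharp (Q : finType) (u : lword Q) : lword Q :=
  fun s t => u s t && lw_recurrent u t.

Definition reifies (R : realType) (A Q : finType) (P : PA R A Q)
  (ws : nat -> seq A) (w : lword Q) : Prop :=
  forall s t,
    cvgn (fun n => Mword P (ws n) s t) /\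
    (w s t = true <-> 0 < limn (fun n => Mword P (ws n) s t)).

Definition strictly_increasing (f : nat -> nat) : Prop :=
  forall m n, (m < n)%N -> (f m < f n)%N.

(* Main.v *)
Require Import Defs.
From mathcomp Require Import all_boot all_order all_algebra.
From mathcomp Require Import all_classical all_reals all_analysis.
From mathcomp Require Import ring lra zify.
Set Implicit Arguments. Unset Strict Implicit. Unset Printing Implicit Defensive.
Import Order.TTheory GRing.Theory Num.Theory numFieldNormedType.Exports.
Local Open Scope classical_set_scope.
Local Open Scope ring_scope.


Definition mmul {R : realType} {Q : finType} (X Y : Q -> Q -> R) : Q -> Q -> R :=
  fun s t => \sum_(q : Q) X s q * Y q t.
Definition mid {R : realType} {Q : finType} : Q -> Q -> R := fun s t => (s == t)%:R.
Fixpoint mpow {R : realType} {Q : finType} (X : Q -> Q -> R) (n : nat) : Q -> Q -> R :=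
  if n is n'.+1 then mmul X (mpow X n') else mid.

Lemma mmulA {R : realType} {Q : finType} (X Y Z : Q -> Q -> R) :
  mmul X (mmul Y Z) = mmul (mmul X Y) Z.
Proof.
apply/funext => s; apply/funext => t; rewrite /mmul.
under eq_bigr do rewrite big_distrr /=.
rewrite exchange_big; apply: eq_bigr => r _; rewrite big_distrl /=.
by apply: eq_bigr => q _; rewrite mulrA.
Qed.

Lemma mmul1l {R : realType} {Q : finType} (X : Q -> Q -> R) : mmul mid X = X.
Proof.
apply/funext => s; apply/funext => t; rewrite /mmul /mid.
rewrite (bigD1 s) //= eqxx mul1r big1 ?addr0 // => q /negbTE.
by rewrite eq_sym => ->; rewrite mul0r.
Qed.

Lemma mmul1r {R : realType} {Q : finType} (X : Q -> Q -> R) : mmul X mid = X.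
Proof.
apply/funext => s; apply/funext => t; rewrite /mmul /mid.
rewrite (bigD1 t) //= eqxx mulr1 big1 ?addr0 // => q /negbTE ->.
by rewrite mulr0.
Qed.

Lemma mpowD {R : realType} {Q : finType} (X : Q -> Q -> R) a b :
  mpow X (a + b) = mmul (mpow X a) (mpow X b).
Proof.
elim: a => [|a IH]; first by rewrite add0n /= mmul1l.
by rewrite addSn /= IH mmulA.
Qed.

Lemma mpowSr {R : realType} {Q : finType} (X : Q -> Q -> R) n :
  mpow X n.+1 = mmul (mpow X n) X.
Proof. by rewrite -addn1 mpowD /= mmul1r. Qed.

Lemma Mword_cat {R : realType} {A Q : finType} (P : PA R A Q) (u v : seq A) :
  Mword P (u ++ v) = mmul (Mword P u) (Mword P v).
Proof.
elim: u => [|a u IH]; first by rewrite /= mmul1l.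
rewrite cat_cons.
change (mmul (pa_delta P a) (Mword P (u ++ v)) =
  mmul (mmul (pa_delta P a) (Mword P u)) (Mword P v)).
by rewrite IH mmulA.
Qed.

Lemma Mword_wpow {R : realType} {A Q : finType} (P : PA R A Q) (w : seq A) n :
  Mword P (wpow w n) = mpow (Mword P w) n.
Proof.
elim: n => [|n IH] //=.
by rewrite /wpow /= Mword_cat -IH.
Qed.

Definition stoch {R : realType} {Q : finType} (X : Q -> Q -> R) :=
  (forall s t, 0 <= X s t) /\ (forall s, \sum_t X s t = 1).

Lemma stoch_mid {R : realType} {Q : finType} : stoch (@mid R Q).
Proof.
split => [s t|s]; first by rewrite /mid ler0n.
rewrite /mid (bigD1 s) //= eqxx big1 ?addr0 // => q /negbTE.
by rewrite eq_sym => ->.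
Qed.

Lemma stoch_mmul {R : realType} {Q : finType} (X Y : Q -> Q -> R) :
  stoch X -> stoch Y -> stoch (mmul X Y).
Proof.
move=> [X0 X1] [Y0 Y1]; split => [s t|s].
  by apply: sumr_ge0 => q _; apply: mulr_ge0.
rewrite /mmul exchange_big /=.
under eq_bigr do rewrite -big_distrr /= Y1 mulr1.
exact: X1.
Qed.

Lemma stoch_mpow {R : realType} {Q : finType} (X : Q -> Q -> R) n :
  stoch X -> stoch (mpow X n).
Proof.
move=> sX; elim: n => [|n IH] /=; first exact: stoch_mid.
exact: stoch_mmul.
Qed.

Lemma stoch_Mword {R : realType} {A Q : finType} (P : PA R A Q) w :
  stoch (Mword P w).
Proof.
elim: w => [|a w IH]; first exact: stoch_mid.
change (stoch (mmul (pa_delta P a) (Mword P w))).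
apply: stoch_mmul => //; split; [exact: pa_delta_ge0 | exact: pa_delta_sum1].
Qed.

Lemma stoch_le1 {R : realType} {Q : finType} (X : Q -> Q -> R) s t :
  stoch X -> X s t <= 1.
Proof.
move=> [X0 X1]; rewrite -(X1 s) (bigD1 t) //= lerDl.
by apply: sumr_ge0 => q _.
Qed.


Lemma cvgn_sum {R : realType} {Q : finType} (F : Q -> nat -> R) (l : Q -> R) :
  (forall q, F q n @[n --> \oo] --> l q) ->
  (\sum_q F q n) @[n --> \oo] --> \sum_q l q.
Proof. by move=> H; apply: cvg_big => // ; exact: add_continuous. Qed.

Lemma limn_ge0 {R : realType} (x : nat -> R) :
  cvgn x -> (forall n, 0 <= x n) -> 0 <= limn x.
Proof. by move=> cx x0; apply: limr_ge => //; exact: nearW. Qed.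

Lemma psum_prod_gt0 {R : realType} {Q : finType} (a b : Q -> R) :
  (forall q, 0 <= a q) -> (forall q, 0 <= b q) ->
  (0 < \sum_q a q * b q) <-> (exists q, 0 < a q /\ 0 < b q).
Proof.
move=> a0 b0; split.
  move=> Hs; apply/not_existsP => Hn; move: Hs; rewrite big1 ?ltxx // => q _.
  have [ha|ha] := ltP 0 (a q); last first.
    have -> : a q = 0 by apply/eqP; rewrite eq_le ha a0.
    by rewrite mul0r.
  have [hb|hb] := ltP 0 (b q); last first.
    have -> : b q = 0 by apply/eqP; rewrite eq_le hb b0.
    by rewrite mulr0.
  by exfalso; apply: (Hn q).
move=> [q [ha hb]]; rewrite (bigD1 q) //=.
apply: (lt_le_trans (mulr_gt0 ha hb)); rewrite lerDl.
by apply: sumr_ge0 => r _; apply: mulr_ge0.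
Qed.

Lemma part1 {R : realType} {A Q : finType} (P : PA R A Q)
  (us vs : nat -> seq A) (u v : lword Q) :
  reifies P us u -> reifies P vs v ->
  reifies P (fun n => us n ++ vs n) (lw_mul u v).
Proof.
move=> Hu Hv s t.
pose lu q := limn (fun n => Mword P (us n) s q).
pose lv q := limn (fun n => Mword P (vs n) q t).
have H : (fun n => Mword P (us n ++ vs n) s t) @ \oo --> \sum_q lu q * lv q.
  under eq_fun do rewrite Mword_cat /mmul.
  apply: cvgn_sum => q; apply: cvgM; [exact: (Hu s q).1 | exact: (Hv q t).1].
split; first by apply/cvg_ex; exists (\sum_q lu q * lv q).
rewrite (cvg_lim _ H) // psum_prod_gt0; last 2 first.
- by move=> q; apply: limn_ge0; [exact: (Hu s q).1 | move=> n; exact: (stoch_Mword P _).1].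
- by move=> q; apply: limn_ge0; [exact: (Hv q t).1 | move=> n; exact: (stoch_Mword P _).1].
rewrite /lw_mul; split.
  by move=> /existsP [q /andP [h1 h2]]; exists q; split; [apply/(Hu s q).2 | apply/(Hv q t).2].
by move=> [q [h1 h2]]; apply/existsP; exists q; apply/andP; split; [apply/(Hu s q).2 | apply/(Hv q t).2].
Qed.


Lemma near_ex (P : nat -> Prop) :
  (\forall n \near \oo, P n) -> exists N, forall n, (N <= n)%N -> P n.
Proof. by case => N _ H; exists N. Qed.

Lemma geo_small {R : realType} (z e : R) : 0 <= z < 1 -> 0 < e ->
  exists b, z ^+ b.+1 < e.
Proof.
move=> /andP [z0 z1] e0.
have zz : `|z| < 1 by rewrite ger0_norm.
have /cvgr_dist_lt /(_ e e0) /near_ex [N HN] := cvg_expr zz.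
exists N; have := HN N.+1 (leqnSn N); rewrite sub0r normrN ger0_norm //.
exact: exprn_ge0.
Qed.

Lemma cauchy_cvgn {R : realType} (x : nat -> R) :
  (forall e, 0 < e -> exists N, forall m, (N <= m)%N -> `|x N - x m| < e) -> cvgn x.
Proof.
move=> H; apply: cauchy_cvg; apply: cauchy_exP => e e0.
rewrite /fmapE -ball_normE /ball_.
have [N HN] := H e e0.
by exists (x N), N => // m Nm; exact: HN.
Qed.


Definition good {R : realType} {Q : finType} (L : Q -> Q -> R) (u : lword Q) (d : R) :=
  [/\ stoch L, (forall s q t, u s q -> u q t -> u s t), (forall s, exists t, u s t),
      (forall s t, u s t <-> 0 < L s t) & (0 < d /\ d <= 1 /\ forall s t, u s t -> d <= L s t)].

Lemma nz_sum {R : realType} {Q : finType} (F : Q -> R) :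
  \sum_q F q != 0 -> exists q, F q != 0.
Proof.
move=> H; apply/not_existsP => Hn; move: H; rewrite big1 ?eqxx // => q _.
by apply/eqP; apply/negPn/negP => h; apply: (Hn q).
Qed.

Lemma Lzero {R : realType} {Q : finType} (L : Q -> Q -> R) u d s t :
  good L u d -> ~~ u s t -> L s t = 0.
Proof.
case=> [[L0 _] _ _ Lp _] nu; apply/eqP; rewrite eq_le L0 andbT leNgt.
by apply/negP => /Lp h; rewrite h in nu.
Qed.

Lemma pow_supportS {R : realType} {Q : finType} (L : Q -> Q -> R) u d k q r :
  good L u d -> mpow L k.+1 q r != 0 -> u q r.
Proof.
move=> G; have [[L0 _] tr _ Lp _] := G.
elim: k q r => [|k IH] q r.
  change (mmul L mid q r != 0 -> u q r); rewrite mmul1r => h.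
  by apply/Lp; rewrite lt_neqAle eq_sym h L0.
change (mmul L (mpow L k.+1) q r != 0 -> u q r) => /nz_sum [x].
rewrite mulf_eq0 negb_or => /andP [h1 h2].
apply: (tr _ x); last exact: IH.
by apply/Lp; rewrite lt_neqAle eq_sym h1 L0.
Qed.

Lemma pow_support {R : realType} {Q : finType} (L : Q -> Q -> R) u d k q r :
  good L u d -> mpow L k q r != 0 -> q = r \/ u q r.
Proof.
move=> G; case: k => [|k].
  change ((q == r)%:R != 0 :> R -> q = r \/ u q r); case: (eqVneq q r) => [-> _|_]; [by left | by rewrite eqxx].
by move/(pow_supportS G); right.
Qed.

Lemma pow_zero {R : realType} {Q : finType} (L : Q -> Q -> R) u d k q r :
  good L u d -> ~~ u q r -> mpow L k.+1 q r = 0.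
Proof.
move=> G nu; apply/eqP/negP => /negP h.
by have := pow_supportS G h; rewrite (negbTE nu).
Qed.

Definition recb {Q : finType} (u : lword Q) r := lw_recurrent u r.

Lemma recP {Q : finType} (u : lword Q) r t : recb u r -> u r t -> u t r.
Proof. by move=> /forallP /(_ t) /implyP. Qed.

Lemma rec_closed {R : realType} {Q : finType} (L : Q -> Q -> R) u d q t :
  good L u d -> recb u q -> u q t -> recb u t.
Proof.
case=> _ tr _ _ _ rq uqt; apply/forallP => x; apply/implyP => utx.
have uxq := recP rq (tr _ _ _ uqt utx).
exact: tr uxq uqt.
Qed.

Lemma rec_refl {R : realType} {Q : finType} (L : Q -> Q -> R) u d t :
  good L u d -> recb u t -> u t t.
Proof.
case=> _ tr sc _ _ rt; have [r utr] := sc t.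
exact: tr utr (recP rt utr).
Qed.

Lemma rec_succ {R : realType} {Q : finType} (L : Q -> Q -> R) u d s :
  good L u d -> exists r, u s r /\ recb u r.
Proof.
case=> _ tr sc _ _; have [t0 ut0] := sc s.
pose S t : {set Q} := finset (u t).
case: (arg_minnP (fun t => #|S t|) ut0) => t ust tmin.
have key y : u t y -> S y = S t.
  move=> uty; apply/eqP; rewrite (eqEcard (S y) (S t)); apply/andP; split.
    by apply/fintype.subsetP => x; rewrite !inE => h; exact: tr uty h.
  exact: tmin (tr _ _ _ ust uty).
have [q utq] := sc t.
exists q; split; first exact: tr ust utq.
apply/forallP => x; apply/implyP => uqx.
have : x \in S t by rewrite -(key q utq) inE.
rewrite inE => utx.
have : q \in S x by rewrite (key x utx) inE.
by rewrite inE.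
Qed.


Lemma convex_bound {R : realType} {Q : finType} (c y : Q -> R) lo hi :
  (forall r, 0 <= c r) -> (forall r, c r != 0 -> lo <= y r <= hi) ->
  (\sum_r c r) * lo <= \sum_r c r * y r <= (\sum_r c r) * hi.
Proof.
move=> c0 cy; rewrite !big_distrl /=; apply/andP; split; apply: ler_sum => r _;
  (case: (eqVneq (c r) 0) => [->|nz]; first by rewrite !mul0r);
  have /andP [h1 h2] := cy r nz; 
  by apply: ler_wpM2l => //; exact: c0.
Qed.

Lemma sum_sub_le1 {R : realType} {Q : finType} (X : Q -> Q -> R) (p : pred Q) s :
  stoch X -> \sum_(q | p q) X s q <= 1.
Proof.
move=> [X0 X1]; have := X1 s; rewrite (bigID p) /= => E.
have : 0 <= \sum_(q | ~~ p q) X s q by apply: sumr_ge0.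
lra.
Qed.

Lemma tau_bound {R : realType} {Q : finType} (L : Q -> Q -> R) u d n s :
  good L u d -> \sum_(q | ~~ recb u q) mpow L n s q <= (1 - d) ^+ n.
Proof.
move=> G; have [[L0 L1] tr sc Lp [d0 [d1 dL]]] := G.
have SL : stoch L by [].
have hrow r : \sum_(q | ~~ recb u q) L r q <= (if recb u r then 0 else 1 - d).
  case: ifPn => rr.
    rewrite big1 // => q nq; apply: (Lzero G); apply/negP => urq.
    by rewrite (rec_closed G rr urq) in nq.
  have [r' [urr' rr']] := rec_succ r G.
  have := L1 r; rewrite (bigID (recb u)) /= => E.
  have : d <= \sum_(q | recb u q) L r q.
    rewrite (bigD1 r') //=; apply: le_trans (dL _ _ urr') _; rewrite lerDl.
    by apply: sumr_ge0 => q _.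
  lra.
elim: n s => [|n IH] s.
  by rewrite expr0; apply: (sum_sub_le1 _ _ (@stoch_mid R Q)).
under eq_bigr do rewrite mpowSr /mmul.
rewrite exchange_big /=.
under eq_bigr do rewrite -big_distrr /=.
apply: le_trans (_ : \sum_r mpow L n s r * (if recb u r then 0 else 1 - d) <= _).
  apply: ler_sum => r _; apply: ler_wpM2l; [exact: (stoch_mpow n SL).1 | exact: hrow].
have -> : \sum_r mpow L n s r * (if recb u r then 0 else 1 - d)
    = (1 - d) * \sum_(r | ~~ recb u r) mpow L n s r.
  rewrite big_distrr /= [RHS]big_mkcond /=; apply: eq_bigr => r _.
  by case: (recb u r) => /=; [rewrite mulr0 | rewrite mulrC].
rewrite exprS; apply: ler_wpM2l; [lra | exact: IH].
Qed.

Lemma class_bound {R : realType} {Q : finType} (L : Q -> Q -> R) u d t n :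
  good L u d -> recb u t -> exists lo, d <= lo /\
    forall q, u t q -> lo <= mpow L n.+1 q t <= lo + (1 - d) ^+ n.+1.
Proof.
move=> G rt; have [[L0 L1] tr sc Lp [d0 [d1 dL]]] := G.
have SL : stoch L by [].
have utt := rec_refl G rt.
elim: n => [|n [lo [dlo IH]]].
  exists d; split => // q utq.
  change (d <= mmul L mid q t <= d + (1 - d) ^+ 1); rewrite mmul1r expr1.
  have uqt := recP rt utq.
  apply/andP; split; first exact: dL.
  have := stoch_le1 q t SL; lra.
pose y r := mpow L n.+1 r t.
have /andP [yt1 yt2] := IH t utt.
exists (d * y t + (1 - d) * lo); split.
  rewrite -/(y t) in yt1; nra.
move=> q utq.
have uqt := recP rt utq.
pose c r := L q r - d * (r == t)%:R.
have E : mpow L n.+2 q t = d * y t + \sum_r c r * y r.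
  change (\sum_r L q r * y r = d * y t + \sum_r c r * y r).
  rewrite (bigD1 t) //= [in RHS](bigD1 t) //= /c eqxx mulr1.
  have -> : \sum_(r | r != t) (L q r - d * (r == t)%:R) * y r
      = \sum_(r | r != t) L q r * y r.
    by apply: eq_bigr => r /negbTE ->; rewrite mulr0 subr0.
  ring.
have Sc : \sum_r c r = 1 - d.
  rewrite /c sumrB -big_distrr /= L1 (bigD1 t) //= eqxx big1 ?addr0 ?mulr1 //.
  by move=> r /negbTE ->.
have c0 r : 0 <= c r.
  rewrite /c; case: (eqVneq r t) => [->|_].
    by rewrite mulr1 subr_ge0; exact: dL.
  by rewrite mulr0 subr0 L0.
have cy r : c r != 0 -> lo <= y r <= lo + (1 - d) ^+ n.+1.
  move=> cnz; apply: IH; move: cnz; rewrite /c.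
  case: (eqVneq r t) => [-> _ //| _]; rewrite mulr0 subr0 => Lnz.
  apply: tr utq _; apply/Lp; by rewrite lt_neqAle eq_sym Lnz L0.
have := convex_bound c0 cy; rewrite Sc E => /andP [h1 h2].
rewrite [(1 - d) ^+ n.+2]exprS.
apply/andP; split; lra.
Qed.


Lemma class_cauchy {R : realType} {Q : finType} (L : Q -> Q -> R) u d t q b k :
  good L u d -> recb u t -> u t q ->
  `|mpow L (k + b.+1) q t - mpow L b.+1 q t| <= (1 - d) ^+ b.+1.
Proof.
move=> G rt utq; have [SL tr sc Lp [d0 [d1 dL]]] := G.
have [lo [_ H]] := class_bound b G rt.
have SM := stoch_mpow k SL.
have E : mpow L (k + b.+1) q t = \sum_r mpow L k q r * mpow L b.+1 r t.
  by rewrite mpowD.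
have cy r : mpow L k q r != 0 -> lo <= mpow L b.+1 r t <= lo + (1 - d) ^+ b.+1.
  move=> /(pow_support G) [<-|uqr]; apply: H => //; exact: tr utq uqr.
have := convex_bound (fun r => SM.1 q r) cy; rewrite SM.2 !mul1r -E => /andP [h1 h2].
have /andP [h3 h4] := H q utq.
rewrite ler_norml; apply/andP; split; lra.
Qed.

Lemma rec_cauchy {R : realType} {Q : finType} (L : Q -> Q -> R) u d q t b k :
  good L u d -> recb u q ->
  `|mpow L (k + b.+1) q t - mpow L b.+1 q t| <= (1 - d) ^+ b.+1.
Proof.
move=> G rq; have [SL tr sc Lp [d0 [d1 dL]]] := G.
case: (boolP (u q t)) => uqt.
  exact: (class_cauchy _ _ G (rec_closed G rq uqt) (recP rq uqt)).
rewrite addnS !(pow_zero _ G uqt) subrr normr0; apply: exprn_ge0; lra.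
Qed.

Lemma main_cauchy {R : realType} {Q : finType} (L : Q -> Q -> R) u d s t a b k :
  good L u d ->
  `|mpow L (a + (k + b.+1)) s t - mpow L (a + b.+1) s t| <= (1 - d) ^+ b.+1 + (1 - d) ^+ a.
Proof.
move=> G; have [SL tr sc Lp [d0 [d1 dL]]] := G.
have SMa := stoch_mpow a SL.
rewrite [mpow L (a + (k + b.+1))]mpowD [mpow L (a + b.+1)]mpowD /mmul -sumrB.
under eq_bigr do rewrite -mulrBr.
apply: le_trans (ler_norm_sum _ _ _) _.
under eq_bigr do rewrite normrM (ger0_norm (SMa.1 _ _)).
rewrite (bigID (recb u)) /=; apply: lerD.
  apply: le_trans (_ : \sum_(r | recb u r) mpow L a s r * (1 - d) ^+ b.+1 <= _).
    by apply: ler_sum => r rr; apply: ler_wpM2l; [exact: SMa.1 | exact: rec_cauchy G rr].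
  rewrite -big_distrl /=.
  have h1 := sum_sub_le1 (recb u) s SMa.
  have h2 : 0 <= \sum_(r | recb u r) mpow L a s r by apply: sumr_ge0 => r _; exact: SMa.1.
  have h3 : 0 <= (1 - d) ^+ b.+1 by apply: exprn_ge0; lra.
  nra.
apply: le_trans (_ : \sum_(r | ~~ recb u r) mpow L a s r * 1 <= _).
  apply: ler_sum => r _; apply: ler_wpM2l; first exact: SMa.1.
  have SMk := stoch_mpow (k + b.+1) SL; have SMb := stoch_mpow b.+1 SL.
  have := SMk.1 r t; have := SMb.1 r t; have := stoch_le1 r t SMk; have := stoch_le1 r t SMb.
  move=> *; rewrite ler_norml; apply/andP; split; change (mmul L (mpow L b) r t) with (mpow L b.+1 r t); lra.
under eq_bigr do rewrite mulr1.
exact: tau_bound.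
Qed.

Lemma cvg_pow {R : realType} {Q : finType} (L : Q -> Q -> R) u d s t :
  good L u d -> cvgn (fun n => mpow L n s t).
Proof.
move=> G; have [SL tr sc Lp [d0 [d1 dL]]] := G.
apply: cauchy_cvgn => e e0.
have h1 : 0 <= 1 - d < 1 by apply/andP; split; lra.
have h2 : 0 < e / 2 by lra.
have [b Hb] := geo_small h1 h2.
exists (b.+1 + b.+1)%N => m Hm.
have -> : m = (b.+1 + ((m - (b.+1 + b.+1)) + b.+1))%N by lia.
rewrite -normrN opprB.
have := main_cauchy s t b.+1 b (m - (b.+1 + b.+1)) G.
move=> /le_lt_trans; apply; lra.
Qed.


Lemma pow_lb {R : realType} {Q : finType} (L : Q -> Q -> R) u d s t n :
  good L u d -> u s t -> recb u t -> d * d <= mpow L n.+2 s t.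
Proof.
move=> G ust rt; have [SL tr sc Lp [d0 [d1 dL]]] := G.
have [lo [dlo H]] := class_bound n G rt.
have utt := rec_refl G rt.
change (d * d <= \sum_r L s r * mpow L n.+1 r t).
rewrite (bigD1 t) //=; apply: le_trans (_ : L s t * mpow L n.+1 t t <= _).
  have /andP [h1 _] := H t utt; have := dL s t ust; have := SL.1 s t; nra.
rewrite lerDl; apply: sumr_ge0 => r _; apply: mulr_ge0; first exact: SL.1.
exact: (stoch_mpow n.+1 SL).1.
Qed.

Lemma pow_ub {R : realType} {Q : finType} (L : Q -> Q -> R) u d s t n :
  good L u d -> ~~ lw_sharp u s t -> mpow L n.+1 s t <= (1 - d) ^+ n.+1.
Proof.
move=> G; have [SL tr sc Lp [d0 [d1 dL]]] := G.
rewrite /lw_sharp negb_and => /orP [nu|nr].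
  rewrite (pow_zero n G nu); apply: exprn_ge0; lra.
apply: le_trans (tau_bound n.+1 s G).
rewrite (bigD1 t) //= lerDl; apply: sumr_ge0 => r _.
exact: (stoch_mpow n.+1 SL).1.
Qed.

Lemma lim_char {R : realType} {Q : finType} (L : Q -> Q -> R) u d s t :
  good L u d -> cvgn (fun n => mpow L n s t) /\
    (lw_sharp u s t <-> 0 < limn (fun n => mpow L n s t)).
Proof.
move=> G; have [SL tr sc Lp [d0 [d1 dL]]] := G.
split; first exact: cvg_pow G.
case: (boolP (lw_sharp u s t)) => hs.
  split => // _; move: (hs) => /andP [ust rt].
  apply: (@lt_le_trans _ _ (d * d)); first exact: mulr_gt0.
  apply: limr_ge; first exact: cvg_pow G.
  exists 2%N => // n /= hn.
  have -> : n = (n - 2).+2 by lia.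
  exact: (pow_lb (n - 2) G ust rt).
split => // hpos; exfalso.
have h1 : 0 <= 1 - d < 1 by apply/andP; split; lra.
have [b Hb] := geo_small h1 hpos.
have : limn (fun n => mpow L n s t) <= (1 - d) ^+ b.+1.
  apply: limr_le; first exact: cvg_pow G.
  exists b.+1 => // n /= hn.
  have -> : n = (n - 1).+1 by lia.
  apply: le_trans (pow_ub (n - 1) G hs) _.
  apply: ler_wiXn2l; [lra | lra | lia].
lra.
Qed.


Lemma perturb {R : realType} {Q : finType} (A L : Q -> Q -> R) e :
  stoch A -> stoch L -> (forall s, \sum_t `|A s t - L s t| <= e) ->
  forall n s, \sum_t `|mpow A n s t - mpow L n s t| <= n%:R * e.
Proof.
move=> [A0 A1] SL He; elim => [|n IH] s.
  by rewrite mul0r big1 // => t _; rewrite subrr normr0.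
have E t : mpow A n.+1 s t - mpow L n.+1 s t =
    \sum_q (A s q * (mpow A n q t - mpow L n q t) + (A s q - L s q) * mpow L n q t).
  by rewrite /= /mmul -sumrB; apply: eq_bigr => q _; ring.
under eq_bigr do rewrite E.
have SLn := stoch_mpow n SL.
apply: le_trans (_ : \sum_t \sum_q (A s q * `|mpow A n q t - mpow L n q t|
    + `|A s q - L s q| * mpow L n q t) <= _).
  apply: ler_sum => t _; apply: le_trans (ler_norm_sum _ _ _) _.
  apply: ler_sum => q _; apply: le_trans (ler_normD _ _) _.
  by rewrite !normrM (ger0_norm (A0 _ _)) (ger0_norm (SLn.1 _ _)).
rewrite exchange_big /=.
under eq_bigr do rewrite big_split /= -big_distrr -big_distrr /= SLn.2 mulr1.
rewrite big_split /= -addn1 natrD mulrDl mul1r; apply: lerD; last exact: He.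
apply: le_trans (_ : \sum_q A s q * (n%:R * e) <= _).
  by apply: ler_sum => q _; apply: ler_wpM2l; [exact: A0 | exact: IH].
by rewrite -big_distrl /= A1 mul1r.
Qed.


Lemma good_lim {R : realType} {A Q : finType} (P : PA R A Q) (us : nat -> seq A) (u : lword Q) :
  is_limit_word u -> reifies P us u -> lw_idempotent u ->
  exists d, good (fun s t => limn (fun n => Mword P (us n) s t)) u d.
Proof.
move=> lu Hu Hid.
set L := fun s t => limn (fun n => Mword P (us n) s t).
have L0 s t : 0 <= L s t.
  by apply: limn_ge0; [exact: (Hu s t).1 | move=> n; exact: (stoch_Mword P _).1].
have L1 s : \sum_t L s t = 1.
  have H := @cvgn_sum R Q (fun (t : Q) (n : nat) => Mword P (us n) s t) (L s) (fun t => (Hu s t).1).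
  have E : (fun n => \sum_t Mword P (us n) s t) = fun _ => 1.
    by apply/funext => n; exact: (stoch_Mword P _).2.
  rewrite E in H; rewrite -(cvg_lim _ H) //; exact: lim_cst.
have SL : stoch L by [].
pose d := \big[Num.min/1]_(p : Q * Q | u p.1 p.2) L p.1 p.2.
exists d; split => //.
- move=> s q t usq uqt; rewrite -Hid /lw_mul; apply/existsP; exists q; exact/andP.
- by move=> s t; exact: (Hu s t).2.
split; [|split].
- apply: (big_ind (fun x => 0 < x)) => //.
    by move=> x y x0 y0; rewrite lt_min x0 y0.
  by move=> p up; apply/(Hu _ _).2.
- apply: (big_ind (fun x => x <= 1)) => //.
    by move=> x y x0 y0; rewrite ge_min x0.
  by move=> p _; exact: stoch_le1.
- move=> s t ust; rewrite /d (bigD1 (s, t)) //=.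
  by rewrite ge_min lexx.
Qed.


Lemma part2 {R : realType} {A Q : finType} (P : PA R A Q) (us : nat -> seq A) (u : lword Q) :
  is_limit_word u -> reifies P us u -> lw_idempotent u ->
   exists f : nat -> nat, strictly_increasing f /\
     forall g : nat -> nat, strictly_increasing g -> (forall n, (f n <= g n)%N) ->
       reifies P (fun n => wpow (us (g n)) n) (lw_sharp u).
Proof.
move=> lu Hu Hid; have [d G] := good_lim lu Hu Hid.
set L := fun s t => limn (fun n => Mword P (us n) s t) in G.
have SL : stoch L by case: G.
pose D m := \sum_s \sum_t `|Mword P (us m) s t - L s t|.
have D0 m : 0 <= D m by apply: sumr_ge0 => s _; apply: sumr_ge0 => t _.
have Dc : D m @[m --> \oo] --> 0.
  have -> : (0:R) = \sum_(s : Q) \sum_(t : Q) `|L s t - L s t|.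
    by rewrite big1 // => s _; rewrite big1 // => t _; rewrite subrr normr0.
  apply: cvgn_sum => s; apply: cvgn_sum => t; apply: cvg_norm.
  exact: (cvgB (Hu s t).1 (cvg_cst (L s t))).
have HN n : exists N, forall m, (N <= m)%N -> D m <= ((n.+1)%:R ^+ 2)^-1.
  have e0 : 0 < ((n.+1)%:R ^+ 2)^-1 :> R by rewrite invr_gt0 exprn_gt0 // ltr0Sn.
  have /cvgr_dist_lt /(_ _ e0) /near_ex [N HN] := Dc.
  exists N => m /HN; rewrite sub0r normrN ger0_norm //; exact: ltW.
have [Nf HNf] := choice HN.
pose f n := (\sum_(k < n.+1) Nf k + n)%N.
exists f; split.
  move=> m n; apply: (@homo_ltn _ f (fun a b => (a < b)%N)) => [y x z|i].
    exact: ltn_trans.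
  rewrite /f (big_ord_recr i.+1) /=; lia.
move=> g _ gf s t.
pose x n := Mword P (wpow (us (g n)) n) s t.
pose y n := mpow L n s t.
have [cy posy] := lim_char s t G.
have bnd n : `|x n - y n| <= harmonic n.
  rewrite /x /y Mword_wpow.
  have SA := stoch_Mword P (us (g n)).
  have row s' : \sum_t `|Mword P (us (g n)) s' t - L s' t| <= ((n.+1)%:R ^+ 2)^-1.
    apply: le_trans (HNf n (g n) _).
      rewrite /D [X in _ <= X](bigD1 s') //= lerDl; apply: sumr_ge0 => r _; apply: sumr_ge0.
      by [].
    apply: leq_trans (gf n); rewrite /f (big_ord_recr n) /=; lia.
  have h := perturb SA SL row n s.
  apply: le_trans (_ : \sum_t `|mpow (Mword P (us (g n))) n s t - mpow L n s t| <= _).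
    rewrite (bigD1 t) //= lerDl; exact: sumr_ge0.
  apply: le_trans h _; rewrite /harmonic /=.
  have hn : (n%:R : R) <= n.+1%:R by rewrite ler_nat.
  have hp : (0 : R) < n.+1%:R by rewrite ltr0Sn.
  rewrite expr2 invfM mulrA; apply: ler_piMl; first by rewrite invr_ge0 ltW.
  by rewrite ler_pdivrMr // mul1r.
have cx : x @ \oo --> limn y.
  have -> : x = (fun n => (x n - y n) + y n) by apply/funext => n; rewrite subrK.
  rewrite -[limn y]add0r; apply: cvgD; last exact: cy.
  apply: norm_cvg0; apply: (@squeeze_cvgr _ _ _ _ (fun _ => 0) harmonic).
  - by apply: nearW => n; rewrite normr_ge0 bnd.
  - exact: cvg_cst.
  - exact: cvg_harmonic.
split; first exact: cvgP cx.
by rewrite (cvg_lim _ cx).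
Qed.


Theorem proposition2p11 (R : realType) (A Q : finType) (P : PA R A Q)
  (us vs : nat -> seq A) (u v : lword Q) :
  is_limit_word u -> is_limit_word v ->
  reifies P us u -> reifies P vs v ->
  reifies P (fun n => us n ++ vs n) (lw_mul u v) /\
  (lw_idempotent u ->
   exists f : nat -> nat, strictly_increasing f /\
     forall g : nat -> nat, strictly_increasing g -> (forall n, (f n <= g n)%N) ->
       reifies P (fun n => wpow (us (g n)) n) (lw_sharp u)).
Proof.
move=> lu lv Hu Hv; split; first exact: part1.
by move=> Hid; exact: part2.
Qed.
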